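(* Let $\mathcal X=\{1,\dots,N\}$ with $N\ge2$, let $0<\alpha<1$ and $0\le\varepsilon\le1-\frac1N$. Let $p,q$ be probability distributions on $\mathcal X$ with $p(x)>0$ for all $x$, let $u$ be the uniform distribution on $\mathcal X$, let $y\in\mathcal X$, and let $p'=U_{\alpha,\varepsilon}(p,y)$. Then \[ \log\frac1{p(y)}-\log\frac1{q(y)}\le \frac1{\log\frac1\alpha}\Big[D(q\parallel p)-D(q\parallel p')+\log\frac1{1-\varepsilon}\Big]+N\Big[D(u\parallel p)-D(u\parallel p')+\log\frac1{(1-\varepsilon)\alpha}\Big]. \]
   Context: All logarithms are natural, with $\log\frac10=+\infty$. For a distribution $p$ on $\mathcal X$, a letter $y$, $0<\alpha<1$ and $0\le\varepsilon\le1-\frac1N$, the update $U_{\alpha,\varepsilon}(p,y)$ is the distribution $p'$ with $p'(x)=\alpha p(x)+(1-\alpha)(1-\varepsilon)$ if $x=y$ and $p'(x)=\alpha p(x)+(1-\alpha)\frac{\varepsilon}{N-1}$ if $x\neq y$. For distributions $q,r$ with $r(x)>0$ for all $x$, $D(q\parallel r)=\sum_{x:\,q(x)>0}q(x)\log\frac{q(x)}{r(x)}$. *)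

(* Defs.v *)
(* Alphabet X = 'I_N (i.e. {0,...,N-1},
   a relabelling of {1,...,N}); reals R : realType; natural log = ln. *)
From mathcomp Require Import all_boot all_order all_algebra.
From mathcomp Require Import all_classical all_reals all_analysis.
Set Implicit Arguments. Unset Strict Implicit. Unset Printing Implicit Defensive.
Import Order.TTheory GRing.Theory Num.Theory.
Local Open Scope ring_scope.

Definition is_distr (R : realType) (N : nat) (p : 'I_N -> R) : Prop :=
  (forall x, 0 <= p x) /\ \sum_(x < N) p x = 1.

Definition upd (R : realType) (N : nat) (alpha eps : R) (p : 'I_N -> R) (y : 'I_N)
  : 'I_N -> R :=
  fun x => if x == y then alpha * p x + (1 - alpha) * (1 - eps)
           else alpha * p x + (1 - alpha) * (eps / (N.-1)%:R).

Definition unif (R : realType) (N : nat) : 'I_N -> R := fun _ => N%:R^-1.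

Definition KL (R : realType) (N : nat) (q r : 'I_N -> R) : R :=
  \sum_(x < N | 0 < q x) q x * ln (q x / r x).

Definition elog_inv (R : realType) (t : R) : \bar R :=
  if t == 0 then +oo%E else (ln (t^-1))%:E.

(* Main.v *)
Require Import Defs.
From mathcomp Require Import all_boot all_order all_algebra.
From mathcomp Require Import all_classical all_reals all_analysis.
From mathcomp Require Import ring lra.
Import Order.TTheory GRing.Theory Num.Theory.
Local Open Scope ring_scope.

Lemma ln_le_sub1 (R : realType) (x : R) : 0 < x -> ln x <= x - 1.
Proof.
move=> x0; have h := @le_ln1Dx R (x - 1).
have e : 1 + (x - 1) = x by rewrite addrC subrK.
rewrite e in h; apply: h; lra.
Qed.

Lemma key (R : realType) (N : nat) (w p p' : 'I_N -> R) (y : 'I_N) (a : R) :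
  0 < a -> is_distr w -> 0 < w y -> (forall x, 0 < p x) ->
  (forall x, a * p x <= p' x) ->
  w y * (ln (p' y) - ln (p y) - ln a) + ln a <= KL w p - KL w p'.
Proof.
move=> a0 [w0 w1] wy p0 hp'.
have p'0 : forall x, 0 < p' x.
  by move=> x; apply: lt_le_trans (hp' x); rewrite mulr_gt0.
have -> : KL w p - KL w p' =
   \sum_(x < N | 0 < w x) (w x * (ln (p' x) - ln (p x) - ln a) + w x * ln a).
  rewrite /KL -sumrB; apply: eq_bigr => x wx.
  rewrite !ln_div ?posrE //; lra.
rewrite big_split /= -mulr_suml.
have -> : \sum_(x < N | 0 < w x) w x = 1.
  rewrite -w1 big_mkcond; apply: eq_bigr => x _.
  by case: ifP => // /negbT; rewrite -leNgt => h; apply/eqP; rewrite eq_le h w0.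
rewrite mul1r lerD2r (bigD1 y) //= lerDl.
apply: sumr_ge0 => x /andP[wx _]; apply: mulr_ge0; first exact: ltW.
have := hp' x; rewrite -ler_ln ?posrE ?mulr_gt0 // lnM ?posrE //; lra.
Qed.
Theorem lemma2 (R : realType) (N : nat) (alpha eps : R) (p q : 'I_N -> R) (y : 'I_N) :
  (2 <= N)%N ->
  0 < alpha -> alpha < 1 ->
  0 <= eps -> eps <= 1 - N%:R^-1 ->
  is_distr p -> is_distr q -> (forall x, 0 < p x) ->
  (elog_inv (p y) - elog_inv (q y) <=
   ((ln (alpha^-1))^-1 * (KL q p - KL q (upd alpha eps p y) + ln ((1 - eps)^-1))
    + N%:R * (KL (@unif R N) p - KL (@unif R N) (upd alpha eps p y)
              + ln (((1 - eps) * alpha)^-1)))%:E)%E.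
Proof.
move=> N2 a0 a1 e0 e1 pd qd p0.
have Npos : 0 < N%:R :> R by rewrite ltr0n; apply: leq_trans N2.
have N1 : 1 <= N%:R :> R by rewrite ler1n; apply: leq_trans N2.
have Ninv : 0 < N%:R^-1 :> R by rewrite invr_gt0.
have e1' : eps < 1 by lra.
have hp' : forall x, alpha * p x <= upd alpha eps p y x.
  move=> x; rewrite /upd; case: ifP => _; rewrite lerDl; apply: mulr_ge0;
    rewrite ?divr_ge0 ?ler0n //; lra.
have My : upd alpha eps p y y = alpha * p y + (1 - alpha) * (1 - eps).
  by rewrite /upd eqxx.
have Py0 : p y != 0 by rewrite gt_eqF.
have [Q0|Q0] := eqVneq (q y) 0.
  rewrite /elog_inv Q0 eqxx (negbTE Py0) /=.
  by rewrite addeNy leNye.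
have Qpos : 0 < q y by rewrite lt_neqAle eq_sym Q0 (proj1 qd).
rewrite /elog_inv (negbTE Q0) (negbTE Py0) lee_fin.
have ud : is_distr (@unif R N).
  split; first by move=> x; rewrite /unif ltW.
  by rewrite /unif sumr_const card_ord -[_ *+ N]mulr_natr mulVf // gt_eqF.
have K1 := @key R N q p _ y alpha a0 qd Qpos p0 hp'.
have K2 := @key R N _ p _ y alpha a0 ud Ninv p0 hp'.
rewrite /unif in K2.
move: K1 K2.
set D1 := KL q p - _.
set D2 := KL _ p - _.
set M := upd alpha eps p y y.
have Mpos : 0 < M.
  by rewrite /M My; apply: addr_gt0; rewrite mulr_gt0 //; lra.
have [K HK] : exists K, K = ln M - ln (p y) - ln alpha by eexists.
rewrite -HK => K1 K2.
rewrite !lnV ?posrE ?mulr_gt0 ?subr_gt0 // lnM ?posrE ?subr_gt0 //.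
set l1 := ln (1 - eps).
set La := - ln alpha.
have Lapos : 0 < La by rewrite /La oppr_gt0 ln_lt0 // a0.
have hLa : La = ln alpha^-1 by rewrite lnV ?posrE.
have eLa : La = - ln alpha by [].
have el1 : l1 = ln (1 - eps) by [].
clearbody La l1.
have Ml : M - alpha * p y = (1 - alpha) * (1 - eps) by rewrite /M My; lra.
have hMK : M - alpha * p y <= M * K.
  have h := @ln_le_sub1 R (alpha * p y / M) (divr_gt0 (mulr_gt0 a0 (p0 y)) Mpos).
  rewrite ln_div ?posrE ?mulr_gt0 // lnM ?posrE // in h.
  have h2 : - K <= alpha * p y / M - 1 by rewrite HK; lra.
  have := ler_wpM2l (ltW Mpos) h2.
  have -> : M * (alpha * p y / M - 1) = alpha * p y - M by field; rewrite gt_eqF.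
  lra.
have Kpos : 0 < K.
  rewrite -(pmulr_rgt0 _ Mpos); apply: lt_le_trans hMK; rewrite Ml mulr_gt0 //; lra.
have hL : alpha * La <= 1 - alpha.
  have h := @ln_le_sub1 R (alpha^-1) (ltac:(by rewrite invr_gt0)).
  rewrite -hLa in h; have := ler_wpM2l (ltW a0) h.
  by rewrite mulrBr mulr1 mulfV ?gt_eqF.
have hLM : alpha * La * (1 - eps) <= M * K.
  apply: le_trans (ler_wpM2r _ hL) _; first lra.
  by rewrite -Ml.
have hln : ln alpha + ln La + l1 <= ln M + ln K.
  move: hLM; rewrite -ler_ln ?posrE ?mulr_gt0 ?subr_gt0 // !lnM ?posrE ?mulr_gt0 ?subr_gt0 //.
  by rewrite -el1.
have hQ : ln (q y) + ln K - ln La <= q y * K / La - 1.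
  have h := @ln_le_sub1 R (q y * K / La) (divr_gt0 (mulr_gt0 Qpos Kpos) Lapos).
  by rewrite ln_div ?posrE ?mulr_gt0 // lnM ?posrE // in h.
have hl1 : l1 <= 0 by rewrite el1 ln_le0 //; lra.
have hl1La : l1 / La <= 0.
  by apply: mulr_le0_ge0 => //; rewrite ltW // invr_gt0.
have hNl : N%:R * l1 <= l1.
  have : 0 <= (N%:R - 1) * (- l1) by apply: mulr_ge0; lra.
  lra.
have h1 : La^-1 * (q y * K - La - l1) <= La^-1 * (D1 - l1).
  by apply: ler_wpM2l; [rewrite ltW // invr_gt0 | lra].
have h1e : La^-1 * (q y * K - La - l1) = q y * K / La - 1 - l1 / La.
  by field; rewrite gt_eqF.
have h2 : N%:R * (N%:R^-1 * K - l1) <= N%:R * (D2 - (l1 + ln alpha)).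
  by apply: ler_wpM2l; [rewrite ltW | lra].
have h2e : N%:R * (N%:R^-1 * K - l1) = K - N%:R * l1.
  by field; rewrite gt_eqF.
lra.
Qed.
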